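(* Let $y:\Lambda\to\mathbb R$ and $\alpha\in[Dy]$ be such that $\alpha_b\to0$ as $|b|\to\infty$. Then for any $\alpha'\in[Dy]$, the set $\mathcal C^\pm[\alpha']$ is finite and $$\sum_{C\in\mathcal C^\pm[\alpha']}\int_{\partial C}\alpha'=\sum_{C\in\mathcal C^\pm[\alpha]}\int_{\partial C}\alpha=\int_\Gamma\alpha,$$ where $\Gamma$ is any loop that encloses all cores of $\alpha$, i.e. $\Gamma=\partial A$ for a finite sum $A$ of positively oriented cells containing every element of $\mathcal C^\pm[\alpha]$.
   Context: $\mathsf R_6$ rotation by $\pi/3$, $a_1=(1,0)^T$, $a_i=\mathsf R_6^{i-1}a_1$, $\Lambda:=(\tfrac12,\tfrac{\sqrt3}{6})^T+\{ma_1+na_2:m,n\in\mathbb Z\}$. Bonds $\mathcal B=\{(\xi,\eta)\in\Lambda^2:|\xi-\eta|=1\}$ (ordered pairs), $-b=(\eta,\xi)$, $Dy_b=y(\eta)-y(\xi)$; $|b|$ is the distance from the origin to the closed segment $b$. A cell is a triple $C=(\xi,\zeta,\eta)$ of lattice points pairwise joined by bonds; positively oriented if counterclockwise; $\partial C=(\xi,\zeta)+(\zeta,\eta)+(\eta,\xi)$; for a finite sum $A$ of cells, $\partial A$ is the sum of their boundaries (as formal sums of bonds, where $b+(-b)=0$). For $\alpha:\mathcal B\to\mathbb R$ and a formal sum $\Gamma=\sum_k b_k$, $\int_\Gamma\alpha=\sum_k\alpha_{b_k}$. $[Dy]$ is the set of $\alpha:\mathcal B\to[-\tfrac12,\tfrac12]$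 with $\alpha_{-b}=-\alpha_b$ and $Dy_b-\alpha_b\in\mathbb Z$ for all $b$. A dislocation core of $\alpha$ is a positively oriented cell $C$ with $\int_{\partial C}\alpha\ne0$; $\mathcal C^\pm[\alpha]$ is the set of dislocation cores of $\alpha$. *)

(* Defs.v *)
From HB Require Import structures.
From mathcomp Require Import all_boot all_order all_algebra.
From mathcomp Require Import all_classical all_reals.
Set Implicit Arguments. Unset Strict Implicit. Unset Printing Implicit Defensive.
Import Order.TTheory GRing.Theory Num.Theory.
Local Open Scope ring_scope.
Local Open Scope classical_set_scope.

(* A lattice point of Lambda is encoded by its integer coordinates (m,n):
   it stands for  pos (m,n) = (1/2, sqrt3/6) + m a1 + n a2  in R^2. *)
Definition pt := (int * int)%type.

Section Lattice.
Variable R : realType.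

Definition s3 : R := Num.sqrt 3.

(* a1 = (1,0), a2 = R6 a1 = (1/2, sqrt3/2) *)
Definition pos (p : pt) : R * R :=
  (2^-1 + p.1%:~R + p.2%:~R / 2, s3 / 6 + p.2%:~R * s3 / 2).

Definition vnorm (v : R * R) : R := Num.sqrt (v.1 ^+ 2 + v.2 ^+ 2).
Definition vsub (u v : R * R) : R * R := (u.1 - v.1, u.2 - v.2).

Definition bond (xi eta : pt) : Prop := vnorm (vsub (pos xi) (pos eta)) = 1.

Definition bnorm (xi eta : pt) : R :=
  inf [set vnorm ((1 - t) * (pos xi).1 + t * (pos eta).1,
                  (1 - t) * (pos xi).2 + t * (pos eta).2) | t in `[0, 1]].

(* A bond function alpha : B -> R is modelled as a function on all ordered
   pairs; only its values on bonds are ever used. *)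

Definition in_Dy (y : pt -> R) (alpha : pt -> pt -> R) : Prop :=
  forall xi eta, bond xi eta ->
    [/\ - 2^-1 <= alpha xi eta <= 2^-1,
        alpha eta xi = - alpha xi eta &
        (y eta - y xi) - alpha xi eta \is a Num.int].

Definition vanishes_at_infinity (alpha : pt -> pt -> R) : Prop :=
  forall eps : R, 0 < eps -> exists r : R, forall xi eta,
    bond xi eta -> r < bnorm xi eta -> `|alpha xi eta| < eps.

(* formal sums of bonds: lists of bonds; integral of alpha over them *)
Definition lint (alpha : pt -> pt -> R) (G : seq (pt * pt)) : R :=
  \sum_(b <- G) alpha b.1 b.2.

Definition cell := (pt * pt * pt)%type.

Definition is_cell (C : cell) : Prop :=
  let: (xi, zeta, eta) := C in bond xi zeta /\ bond zeta eta /\ bond eta xi.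

Definition pos_oriented (C : cell) : Prop :=
  let: (xi, zeta, eta) := C in
  is_cell C /\
  let u := vsub (pos zeta) (pos xi) in
  let v := vsub (pos eta) (pos xi) in
  0 < u.1 * v.2 - u.2 * v.1.

Definition bdry (C : cell) : seq (pt * pt) :=
  let: (xi, zeta, eta) := C in [:: (xi, zeta); (zeta, eta); (eta, xi)].

Definition bdryA (A : seq cell) : seq (pt * pt) := flatten (map bdry A).

Definition cores (alpha : pt -> pt -> R) : set cell :=
  [set C | pos_oriented C /\ lint alpha (bdry C) != 0].

End Lattice.

(* Main.v *)
Require Import Defs.
From HB Require Import structures.
From mathcomp Require Import all_boot all_order all_algebra.
From mathcomp Require Import all_classical all_reals.
From mathcomp Require Import ring lra.
Set Implicit Arguments. Unset Strict Implicit. Unset Printing Implicit Defensive.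
Import Order.TTheory GRing.Theory Num.Theory.
Local Open Scope ring_scope.
Local Open Scope classical_set_scope.
Lemma vnorm_ge1 (R : realType) (v : R * R) : `|v.1| <= vnorm v.
Proof.
rewrite /vnorm -sqrtr_sqr; apply: ler_wsqrtr; rewrite lerDl; exact: sqr_ge0.
Qed.

Lemma vnorm_ge2 (R : realType) (v : R * R) : `|v.2| <= vnorm v.
Proof.
rewrite /vnorm -sqrtr_sqr; apply: ler_wsqrtr; rewrite lerDr; exact: sqr_ge0.
Qed.

Lemma bond_coord (R : realType) a b : bond R a b ->
  `|(pos R a).1 - (pos R b).1| <= 1 /\ `|(pos R a).2 - (pos R b).2| <= 1.
Proof.
move=> h; split.
  by have := vnorm_ge1 (vsub (pos R a) (pos R b)); rewrite h.
by have := vnorm_ge2 (vsub (pos R a) (pos R b)); rewrite h.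
Qed.

Lemma bond_sym (R : realType) a b : bond R a b -> bond R b a.
Proof.
rewrite /bond => h; rewrite -[X in _ = X]h /vnorm /vsub /=; congr (Num.sqrt _); ring.
Qed.

Lemma bnorm_ge (R : realType) a b : bond R a b ->
  `|(pos R a).1| - 1 <= bnorm R a b /\ `|(pos R a).2| - 1 <= bnorm R a b.
Proof.
move=> /bond_coord [h1 h2].
have key : forall (u v : R) t, 0 <= t <= 1 -> `|u - v| <= 1 ->
   `|u| - 1 <= `|(1 - t) * u + t * v|.
  move=> u v t /andP[t0 t1] huv.
  set w := (1 - t) * u + t * v.
  have e : u = w + t * (u - v) by rewrite /w; ring.
  have := ler_normD w (t * (u - v)); rewrite -e normrM (ger0_norm t0).
  have : t * `|u - v| <= 1 by rewrite -(mulr1 1); apply: ler_pM.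
  lra.
rewrite /bnorm; split; apply: lb_le_inf.
- by exists (vnorm ((1 - 0) * (pos R a).1 + 0 * (pos R b).1, (1 - 0) * (pos R a).2 + 0 * (pos R b).2)), 0 => //=; rewrite in_itv /= lexx ler01.
- move=> _ [t t01 <-]; apply: le_trans (vnorm_ge1 _) => /=; apply: key h1.
  by move: t01; rewrite /= in_itv.
- by exists (vnorm ((1 - 0) * (pos R a).1 + 0 * (pos R b).1, (1 - 0) * (pos R a).2 + 0 * (pos R b).2)), 0 => //=; rewrite in_itv /= lexx ler01.
- move=> _ [t t01 <-]; apply: le_trans (vnorm_ge2 _) => /=; apply: key h2.
  by move: t01; rewrite /= in_itv.
Qed.
From mathcomp Require Import zify.
Lemma int_box_fin (N : nat) : finite_set [set z : int | - (N%:Z) < z < N%:Z].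
Proof.
apply: (sub_finite_set (B := (fun i : 'I_(N + N) => (i : nat)%:Z - N%:Z) @` setT)).
  move=> z /andP [h1 h2].
  have hi : (absz (z + N%:Z)%R < N + N)%N by lia.
  exists (Ordinal hi) => //=; lia.
exact: finite_image finite_finset.
Qed.
Lemma s3_ge1 (R : realType) : 1 <= s3 R.
Proof. by rewrite /s3 -{1}sqrtr1; apply: ler_wsqrtr; rewrite ler1n. Qed.

Lemma box_fin (R : realType) (K : R) :
  finite_set [set p : pt | `|(pos R p).1| <= K /\ `|(pos R p).2| <= K].
Proof.
have h3 := s3_ge1 R.
set N := Num.Def.archi_bound `|2 * K + 1 + 1|.
have hN : 2 * K + 1 + 1 < N%:R.
  apply: le_lt_trans (ler_norm _) _; exact: archi_boundP.
apply: (sub_finite_set (B := [set z : int | - (N%:Z) < z < N%:Z] `*` [set z : int | - (N%:Z) < z < N%:Z])); last first.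
  by apply: finite_setX; exact: int_box_fin.
move=> [m n] /= [].
rewrite !ler_norml => /andP[a1 a2] /andP[b1 b2].
have hn1 : - (N%:R) < n%:~R :> R by nra.
have hn2 : n%:~R < N%:R :> R by nra.
have hm1 : - (N%:R) < m%:~R :> R by nra.
have hm2 : m%:~R < N%:R :> R by nra.
split; apply/andP; split.
- by rewrite -(ltr_int R) rmorphN.
- by rewrite -(ltr_int R).
- by rewrite -(ltr_int R) rmorphN.
- by rewrite -(ltr_int R).
Qed.

Definition inbox (R : realType) (M : R) (p : pt) :=
  `|(pos R p).1| <= M /\ `|(pos R p).2| <= M.

Lemma inbox_le (R : realType) (M M' : R) p : M <= M' -> inbox M p -> inbox M' p.
Proof. by move=> hM [h1 h2]; split; apply: le_trans hM. Qed.

Lemma inbox_bond (R : realType) (M : R) a v : inbox M a ->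
  bond R a v \/ bond R v a -> inbox (M + 1) v.
Proof.
have step : forall u w : R, `|u| <= M -> `|u - w| <= 1 -> `|w| <= M + 1.
  move=> u w hu huw; have e : w = u - (u - w) by ring.
  rewrite e; apply: le_trans (ler_normB _ _) _; exact: lerD.
have step' : forall u w : R, `|u| <= M -> `|w - u| <= 1 -> `|w| <= M + 1.
  by move=> u w hu; rewrite distrC; apply: step.
move=> [h1 h2] [/bond_coord[c1 c2]|/bond_coord[c1 c2]]; split.
- exact: step h1 c1.
- exact: step h2 c2.
- exact: step' h1 c1.
- exact: step' h2 c2.
Qed.

Lemma box_fin' (R : realType) (M : R) : finite_set (inbox M).
Proof. exact: box_fin. Qed.

Lemma lint_cell (R : realType) (al : pt -> pt -> R) x z e :
  lint al (bdry ((x, z), e)) = al x z + al z e + al e x.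
Proof. by rewrite /lint /= !big_cons big_nil addr0 addrA. Qed.

Lemma lint_int (R : realType) y (al : pt -> pt -> R) x z e :
  in_Dy y al -> is_cell R ((x, z), e) -> lint al (bdry ((x, z), e)) \is a Num.int.
Proof.
move=> hD [b1 [b2 b3]].
have [_ _ i1] := hD _ _ b1; have [_ _ i2] := hD _ _ b2; have [_ _ i3] := hD _ _ b3.
have -> : lint al (bdry ((x, z), e)) =
  - ((y z - y x - al x z) + (y e - y z - al z e) + (y x - y e - al e x)).
  rewrite lint_cell; ring.
by rewrite rpredN; apply: rpredD; [apply: rpredD|].

Qed.

Lemma int_small (R : realType) (x : R) : x \is a Num.int -> `|x| < 1 -> x = 0.
Proof.
move=> hx hlt; apply/eqP; apply/negPn/negP => hx0.
by have := norm_intr_ge1 hx hx0; rewrite leNgt hlt.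
Qed.

Definition Bad (R : realType) (al : pt -> pt -> R) : set cell :=
  [set C : cell | is_cell R C /\ (3^-1 <= `|al C.1.1 C.1.2| \/
     3^-1 <= `|al C.1.2 C.2| \/ 3^-1 <= `|al C.2 C.1.1|)].

Lemma Bad_fin (R : realType) (al : pt -> pt -> R) :
  vanishes_at_infinity al -> finite_set (Bad al).
Proof.
move=> hv; have [r hr] := hv 3^-1 ltac:(rewrite invr_gt0; lra).
have edge : forall a b, bond R a b -> 3^-1 <= `|al a b| -> inbox (r + 1) a.
  move=> a b hab hal; have [g1 g2] := bnorm_ge hab.
  have hb : bnorm R a b <= r.
    rewrite leNgt; apply/negP => /(hr _ _ hab); rewrite ltNge hal //.
  split; lra.
apply: (sub_finite_set (B := (inbox (r + 1 + 1) `*` inbox (r + 1 + 1)) `*` inbox (r + 1 + 1))); last first.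
  by apply: finite_setX; [apply: finite_setX|]; exact: box_fin'.
move=> [[x z] e] /= [[b1 [b2 b3]] hb].
have le1 : r + 1 <= r + 1 + 1 by lra.
case: hb => [h|[h|h]].
- have bx := edge _ _ b1 h.
  split; [split|].
  + exact: inbox_le le1 bx.
  + by apply: inbox_bond bx _; left.
  + by apply: inbox_bond bx _; right.
- have bz := edge _ _ b2 h.
  split; [split|].
  + by apply: inbox_bond bz _; right.
  + exact: inbox_le le1 bz.
  + by apply: inbox_bond bz _; left.
- have be := edge _ _ b3 h.
  split; [split|].
  + by apply: inbox_bond be _; left.
  + by apply: inbox_bond be _; right.
  + exact: inbox_le le1 be.
Qed.

Definition Tc (C : cell) : cell :=
  let: ((x, z), e) := C in ((z, x), (x.1 + z.1 - e.1, x.2 + z.2 - e.2)%R).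
Definition rot (C : cell) : cell := let: ((x, z), e) := C in ((z, e), x).

Lemma TcK : involutive Tc.
Proof.
move=> [[x z] [e1 e2]] /=; congr (_, (_, _)); ring.
Qed.

Lemma rot3 C : rot (rot (rot C)) = C.
Proof. by case: C => [[x z] e]. Qed.

Lemma pos_refl (R : realType) (x z e : pt) :
  pos R (x.1 + z.1 - e.1, x.2 + z.2 - e.2)%R =
  ((pos R x).1 + (pos R z).1 - (pos R e).1, (pos R x).2 + (pos R z).2 - (pos R e).2).
Proof. rewrite /pos /=; congr (_, _); rewrite !(intrD, intrB); ring. Qed.

Lemma bond_eq (R : realType) a b c d :
  vsub (pos R a) (pos R b) = vsub (pos R c) (pos R d) -> bond R c d -> bond R a b.
Proof. by rewrite /bond => ->. Qed.

Lemma Tc_pos (R : realType) C : pos_oriented R C -> pos_oriented R (Tc C).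
Proof.
case: C => [[x z] e] /= [[b1 [b2 b3]] hc]; split; [split; [|split]|].
- exact: bond_sym.
- apply: (bond_eq (c := e) (d := z)); last exact: bond_sym.
  rewrite pos_refl /vsub /=; congr (_, _); lra.
- apply: (bond_eq (c := x) (d := e)); last exact: bond_sym.
  rewrite pos_refl /vsub /=; congr (_, _); lra.
- rewrite /= !(intrD, intrB); move: hc; nra.
Qed.

Lemma rot_pos (R : realType) C : pos_oriented R C -> pos_oriented R (rot C).
Proof.
case: C => [[x z] e] /= [[b1 [b2 b3]] hc]; split; [split; [|split]|] => //.
move: hc; rewrite /=; nra.
Qed.

Lemma fsbigN (T : choiceType) (R : realType) (A : set T) (f : T -> R) :
  \sum_(i \in A) - f i = - \sum_(i \in A) f i.
Proof.
have E : finite_support 0 A (fun i => - f i) = finite_support 0 A f.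
  have P : (fun i => - f i) @^-1` [set~ 0] = f @^-1` [set~ 0].
    apply/funext => x; apply/propext; rewrite /preimage /=; split => h h0; apply: h.
      by rewrite h0 oppr0.
    by move/eqP: h0; rewrite oppr_eq0 => /eqP.
  by rewrite /finite_support P.
by rewrite E sumrN.
Qed.

Lemma fsbig_splitR (T : choiceType) (R : realType) (P : set T) (f g : T -> R) :
  finite_set P -> \sum_(x \in P) (f x + g x) = \sum_(x \in P) f x + \sum_(x \in P) g x.
Proof. exact: fsbig_split. Qed.

Lemma beta_big (R : realType) y (al al' : pt -> pt -> R) a b :
  in_Dy y al -> in_Dy y al' -> bond R a b -> al' a b - al a b != 0 ->
  2^-1 <= `|al a b|.
Proof.
move=> hD hD' hb hne.
have [r1 _ i1] := hD _ _ hb; have [r1' _ i1'] := hD' _ _ hb.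
have hi : al' a b - al a b \is a Num.int.
  have -> : al' a b - al a b = (y b - y a - al a b) - (y b - y a - al' a b) by ring.
  by apply: rpredB.
have h1 := norm_intr_ge1 hi hne.
have h2 := ler_normB (al' a b) (al a b).
have h3 : `|al' a b| <= 2^-1 by rewrite ler_norml.
lra.
Qed.

Lemma cell_small (R : realType) y (al : pt -> pt -> R) x z e :
  in_Dy y al -> is_cell R ((x, z), e) ->
  `|al x z| < 3^-1 -> `|al z e| < 3^-1 -> `|al e x| < 3^-1 ->
  lint al (bdry ((x, z), e)) = 0.
Proof.
move=> hD hc h1 h2 h3; apply: int_small; first exact: lint_int hD hc.
rewrite lint_cell; apply: le_lt_trans (ler_normD _ _) _.
have := ler_normD (al x z) (al z e); lra.
Qed.

Theorem proposition2p3 (R : realType) (y : pt -> R) (alpha : pt -> pt -> R) :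
  in_Dy y alpha -> vanishes_at_infinity alpha ->
  forall alpha' : pt -> pt -> R, in_Dy y alpha' ->
    [/\ finite_set (cores alpha'),
        \sum_(C \in cores alpha') lint alpha' (bdry C)
          = \sum_(C \in cores alpha) lint alpha (bdry C) &
        forall A : seq cell, uniq A -> (forall C : cell, C \in A -> pos_oriented R C) ->
          (forall C : cell, cores alpha C -> C \in A) ->
          \sum_(C \in cores alpha) lint alpha (bdry C) = lint alpha (bdryA A)].
Proof.
move=> hD hv al' hD'.
have finB := Bad_fin hv.
have coreB : forall al2, in_Dy y al2 -> cores al2 `<=` Bad alpha.
  move=> al2 hD2 [[x z] e] [hp hne].
  have hc : is_cell R ((x, z), e) by case: hp.
  split => //=.
  case: (lerP 3^-1 `|alpha x z|) => [h|h1]; first by left.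
  case: (lerP 3^-1 `|alpha z e|) => [h|h2]; first by right; left.
  case: (lerP 3^-1 `|alpha e x|) => [h|h3]; first by right; right.
  exfalso; move/eqP: hne; apply.
  have eqe : forall a b, bond R a b -> `|alpha a b| < 3^-1 -> al2 a b = alpha a b.
    move=> a b hb hs; apply/eqP; rewrite -subr_eq0; apply/negPn/negP => hn.
    have := beta_big hD hD2 hb hn; lra.
  have [b1 [b2 b3]] := hc.
  rewrite lint_cell (eqe _ _ b1 h1) (eqe _ _ b2 h2) (eqe _ _ b3 h3) -lint_cell.
  exact: cell_small hD hc h1 h2 h3.
split.
- exact: sub_finite_set (coreB _ hD') finB.
- set g := fun C : cell => if `[< pos_oriented R C >]
      then al' C.1.1 C.1.2 - alpha C.1.1 C.1.2 else 0.
  set F2 := fun (al2 : pt -> pt -> R) (C : cell) =>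
      if `[< pos_oriented R C >] then lint al2 (bdry C) else 0.
  have sumcore : forall al2, in_Dy y al2 ->
      \sum_(C \in cores al2) lint al2 (bdry C) = \sum_(C \in Bad alpha) F2 al2 C.
    move=> al2 hD2; rewrite (eq_fsbigr (F2 al2)); last first.
      by move=> C; rewrite inE => -[hp _]; rewrite /F2 asboolT.
    apply: fsbig_widen; first exact: coreB.
    move=> C [_ hnc]; rewrite /preimage /= /F2; case: asboolP => hp //.
    by apply/eqP; apply/negPn/negP => hne; apply: hnc.
  rewrite !sumcore //.
  have decomp : forall C, F2 al' C = F2 alpha C + (g C + g (rot C) + g (rot (rot C))).
    move=> C; rewrite /F2 /g; case: (asboolP (pos_oriented R C)) => hp.
      rewrite (asboolT (rot_pos hp)) (asboolT (rot_pos (rot_pos hp))).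
      case: C {hp} => [[x z] e] /=; rewrite !lint_cell; ring.
    have hn1 : ~ pos_oriented R (rot C) by move/rot_pos/rot_pos; rewrite rot3.
    have hn2 : ~ pos_oriented R (rot (rot C)) by move/rot_pos; rewrite rot3.
    by rewrite (asboolF hn1) (asboolF hn2) !addr0.
  rewrite (eq_fsbigr (fun C => F2 alpha C + (g C + g (rot C) + g (rot (rot C))))); last first.
    by move=> C _; exact: decomp.
  rewrite !fsbig_splitR //.
  have zB : forall h : cell -> R, (forall C, h C != 0 -> Bad alpha C) ->
      \sum_(C \in Bad alpha) h C = \sum_(C \in [set: cell]) h C.
    move=> h hh; apply: fsbig_widen => // C [_ hC]; rewrite /preimage /=.
    by apply/eqP; apply/negPn/negP => /hh.
  have gT : \sum_(C \in [set: cell]) g C = 0.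
    have gTc : forall C, g (Tc C) = - g C.
      move=> C; rewrite /g; case: (asboolP (pos_oriented R C)) => hp.
        rewrite (asboolT (Tc_pos hp)).
        case: C hp => [[x z] e] /= [[b1 _] _].
        have [_ a1 _] := hD _ _ b1; have [_ a2 _] := hD' _ _ b1.
        rewrite a1 a2; ring.
      have hn : ~ pos_oriented R (Tc C) by move/Tc_pos; rewrite TcK.
      by rewrite (asboolF hn) oppr0.
    have e : \sum_(C \in [set: cell]) g C = \sum_(C \in [set: cell]) g (Tc C).
      exact: (reindex_fsbigT Tc g (Bijective TcK TcK)).
    have e2 : \sum_(C \in [set: cell]) g (Tc C) = \sum_(C \in [set: cell]) - g C.
      by apply: eq_fsbigr => C _; exact: gTc.
    rewrite e2 fsbigN in e; lra.
  have grot : \sum_(C \in [set: cell]) g (rot C) = 0.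
    rewrite -[RHS]gT; symmetry; apply: reindex_fsbigT.
    exact: (Bijective (g := fun C => rot (rot C)) rot3 rot3).
  have grot2 : \sum_(C \in [set: cell]) g (rot (rot C)) = 0.
    rewrite -[RHS]gT; symmetry; apply: (reindex_fsbigT (fun C => rot (rot C))).
    exact: (Bijective (g := rot) rot3 rot3).
  have badg : forall x z e, pos_oriented R ((x, z), e) -> al' x z - alpha x z != 0 ->
      3^-1 <= `|alpha x z|.
    move=> x z e [[b1 _] _] hn; have := beta_big hD hD' b1 hn; lra.
  rewrite (zB g); last first.
    move=> C; rewrite /g; case: asboolP => hp hn; last by rewrite eqxx in hn.
    case: C hp hn => [[x z] e] hp hn /=; split; first by case: hp.
    by left; exact: badg hp hn.
  rewrite (_ : \sum_(C \in Bad alpha) g (rot C) = \sum_(C \in [set: cell]) g (rot C)); last first.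
    apply: (zB (fun C => g (rot C))) => C /=.
    rewrite /g; case: asboolP => hp hn; last by rewrite eqxx in hn.
    have hp0 : pos_oriented R C by move: (rot_pos (rot_pos hp)); rewrite rot3.
    case: C hp hp0 hn => [[x z] e] hp hp0 hn /=; split; first by case: hp0.
    by right; left; exact: badg hp hn.
  rewrite (_ : \sum_(C \in Bad alpha) g (rot (rot C)) = \sum_(C \in [set: cell]) g (rot (rot C))); last first.
    apply: (zB (fun C => g (rot (rot C)))) => C /=.
    rewrite /g; case: asboolP => hp hn; last by rewrite eqxx in hn.
    have hp0 : pos_oriented R C by move: (rot_pos hp); rewrite rot3.
    case: C hp hp0 hn => [[x z] e] hp hp0 hn /=; split; first by case: hp0.
    by right; right; exact: badg hp hn.
  by rewrite gT grot grot2 !addr0.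
- move=> A uA hA hcA.
  have -> : lint alpha (bdryA A) = \sum_(C <- A) lint alpha (bdry C).
    by rewrite /lint /bdryA big_flatten big_map.
  apply: fsbig_fwiden => //.
  move=> C [hCA hnc]; rewrite /preimage /=; apply/eqP; apply/negPn/negP => hne.
  by apply: hnc; split => //; exact: hA.
Qed.
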